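(* Let $H,H'\le F_N$ be nontrivial finitely generated subgroups with $H=\mathrm{Comm}_{F_N}(H)$ and $H'=\mathrm{Comm}_{F_N}(H')$. Then $\eta_H=\eta_{H'}$ if and only if $H$ and $H'$ are conjugate in $F_N$.
   Context: $\mathfrak C_N$ is the set of closed subsets of $\partial F_N$ with at least two points. For a nontrivial subgroup $H$, $\Lambda(H)\subseteq\partial F_N$ is its limit set (limits of sequences in $H$); $\mathrm{Comm}_{F_N}(H)=\{g:[H:H\cap gHg^{-1}]<\infty,\ [gHg^{-1}:H\cap gHg^{-1}]<\infty\}$. For finitely generated nontrivial $H=\mathrm{Comm}_{F_N}(H)$, $\eta_H=\sum_{H_1\text{ conjugate to }H}\delta_{\Lambda(H_1)}$, a measure on $\mathfrak C_N$. *)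

(* Defs.v *)
From HB Require Import structures.
From mathcomp Require Import all_boot all_order all_algebra.
From mathcomp Require Import all_classical all_reals.
From mathcomp Require Import ereal topology esum.
From mathcomp Require Import Rstruct.
Set Implicit Arguments.
Unset Strict Implicit.
Unset Printing Implicit Defensive.
Import Order.TTheory GRing.Theory Num.Theory.
Local Open Scope classical_set_scope.

(* letters: a generator index together with a sign (true = inverse) *)
Definition letter (N : nat) := ('I_N * bool)%type.
Definition linv N (x : letter N) : letter N := (x.1, ~~ x.2).

Definition reduced N (w : seq (letter N)) : bool :=
  sorted (fun x y => y != linv x) w.

Definition cons_red N (x : letter N) (w : seq (letter N)) : seq (letter N) :=
  if w is y :: w' then (if y == linv x then w' else x :: w) else [:: x].
Definition reduce N (w : seq (letter N)) : seq (letter N) :=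
  foldr (@cons_red N) [::] w.

Lemma cons_red_reduced N (x : letter N) w : reduced w -> reduced (cons_red x w).
Proof.
case: w => [|y w] //= Hw.
case: ifP => Hy; first by move: Hw; rewrite /reduced; case: w => //= z w /andP[].
by rewrite /reduced /= Hy.
Qed.

Lemma reduce_reduced N (w : seq (letter N)) : reduced (reduce w).
Proof. by elim: w => [|x w IH] //=; apply: cons_red_reduced. Qed.

Definition FN (N : nat) := {w : seq (letter N) | reduced w}.

Definition oneF N : FN N := exist _ [::] (erefl true).
Definition mulF N (u v : FN N) : FN N :=
  exist _ (reduce (proj1_sig u ++ proj1_sig v)) (reduce_reduced _).
Definition invF N (u : FN N) : FN N :=
  exist _ (reduce (rev (map (@linv N) (proj1_sig u)))) (reduce_reduced _).

Definition subgroup N (H : set (FN N)) : Prop :=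
  H (oneF N) /\ forall x y, H x -> H y -> H (mulF x (invF y)).

Definition generated N (S : seq (FN N)) : set (FN N) :=
  [set x | forall K, subgroup K -> (forall s, List.In s S -> K s) -> K x].

Definition fin_gen N (H : set (FN N)) : Prop :=
  exists S : seq (FN N), H = generated S.

Definition nontrivial N (H : set (FN N)) : Prop :=
  exists h, H h /\ h <> oneF N.

Definition conjS N (g : FN N) (H : set (FN N)) : set (FN N) :=
  [set mulF (mulF g h) (invF g) | h in H].

(* [H : K] < oo  (for K a subgroup of H): H is covered by finitely many
   left cosets x K with x in H *)
Definition finite_index N (K H : set (FN N)) : Prop :=
  exists s : seq (FN N), (forall x, List.In x s -> H x) /\
    forall h, H h -> exists x, List.In x s /\ exists k, K k /\ h = mulF x k.

Definition Comm N (H : set (FN N)) : set (FN N) :=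
  [set g | finite_index (H `&` conjS g H) H /\
           finite_index (H `&` conjS g H) (conjS g H)].

Definition bdry (N : nat) :=
  {xi : nat -> letter N | forall n, xi n.+1 != linv (xi n)}.

(* convergence of a sequence of elements of F_N to a boundary point
   (topology of F_N \cup \partial F_N: agreement on longer and longer prefixes) *)
Definition conv_bd N (h : nat -> FN N) (xi : bdry N) : Prop :=
  forall k, exists n0, forall n, (n0 <= n)%N ->
    take k (proj1_sig (h n)) = mkseq (proj1_sig xi) k.

Definition limset N (H : set (FN N)) : set (bdry N) :=
  [set xi | exists h : nat -> FN N, (forall n, H (h n)) /\ conv_bd h xi].

(* closed subsets of \partial F_N (cylinder topology) *)
Definition closedB N (C : set (bdry N)) : Prop :=
  forall xi : bdry N,
    (forall k, exists e, C e /\ forall i, (i < k)%N -> proj1_sig e i = proj1_sig xi i) ->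
    C xi.

Definition CN N : set (set (bdry N)) :=
  [set C | closedB C /\ exists a b, C a /\ C b /\ a <> b].

(* eta_H = sum over conjugates H1 of H of the Dirac mass at Lambda(H1),
   evaluated on a set A of closed subsets *)
Definition eta N (H : set (FN N)) (A : set (set (bdry N))) : \bar Rdefinitions.R :=
  (\esum_(K in [set K | exists g : FN N, K = conjS g H])
      ((if `[< A (limset K) >] then 1 else 0 : Rdefinitions.R)%:E))%R.

(* Main.v *)
Require Import Defs.
From mathcomp Require Import all_boot all_order all_algebra.
From mathcomp Require Import all_classical all_reals.
From mathcomp Require Import ereal topology esum.
From mathcomp Require Import Rstruct.
Local Open Scope classical_set_scope.
Set Implicit Arguments.
Unset Strict Implicit.
Unset Printing Implicit Defensive.
Local Notation invF := Defs.invF.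
Section FreeGroup.
Variable N : nat.
Implicit Types (x y : letter N) (u v w : seq (letter N)) (a b c g h : FN N).

Lemma linvK x : linv (linv x) = x.
Proof. by case: x => i b; rewrite /linv /= negbK. Qed.

Lemma linv_neq x : (x == linv x) = false.
Proof. by case: x => i b; rewrite /linv /= xpair_eqE eqxx /=; case: b. Qed.

Lemma linv_inj : injective (@linv N).
Proof. by move=> x y H; rewrite -(linvK x) H linvK. Qed.

Lemma linv_eqC x y : (y == linv x) = (x == linv y).
Proof. by apply/eqP/eqP => ->; rewrite linvK. Qed.

Lemma reduced_cons x w : reduced (x :: w) = (if w is y :: _ then y != linv x else true) && reduced w.
Proof. by case: w => //= y w; rewrite /reduced /=. Qed.

Lemma reduce_id w : reduced w -> reduce w = w.
Proof.
elim: w => // x w IH; rewrite reduced_cons => /andP[H1 H2]; rewrite /= IH //.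
by case: w H1 {IH H2} => //= y w /negbTE ->.
Qed.

Lemma cons_red_cancel x w : reduced w -> cons_red x (cons_red (linv x) w) = w.
Proof.
case: w => [|y w] Hr; first by rewrite /= eqxx.
rewrite /= linvK; case: eqP => [Hy|Hy]; last by rewrite /= eqxx.
subst y; case: w Hr => // z w; rewrite reduced_cons => /andP[/negbTE H _].
by rewrite /= H.
Qed.

Lemma foldr_cr_reduced u v : reduced v -> reduced (foldr (@cons_red N) v u).
Proof. by elim: u => //= x u IH Hv; apply: cons_red_reduced; apply: IH. Qed.

Lemma reduce_cat u v : reduce (u ++ v) = foldr (@cons_red N) (reduce v) u.
Proof. by rewrite /reduce foldr_cat. Qed.

Lemma foldr_reduce u v : reduced v -> foldr (@cons_red N) v (reduce u) = foldr (@cons_red N) v u.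
Proof.
move=> Hv; elim: u => //= x u IH.
have Hr := reduce_reduced u.
case E: (reduce u) => [|y r] /=; first by rewrite -IH E.
case: eqP => [Hy|Hy] /=; last by rewrite -IH E.
rewrite -IH E /= Hy cons_red_cancel //.
by apply: foldr_cr_reduced.
Qed.

Lemma reduce_catr u v : reduce (u ++ reduce v) = reduce (u ++ v).
Proof. by rewrite !reduce_cat reduce_id // reduce_reduced. Qed.

Lemma reduce_catl u v : reduce (reduce u ++ v) = reduce (u ++ v).
Proof. by rewrite !reduce_cat foldr_reduce // reduce_reduced. Qed.

Definition winv w := rev (map (@linv N) w).

Lemma winvK w : winv (winv w) = w.
Proof. by rewrite /winv map_rev revK -map_comp map_id_in // => x _ /=; rewrite linvK. Qed.

Lemma winv_cat u v : winv (u ++ v) = winv v ++ winv u.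
Proof. by rewrite /winv map_cat rev_cat. Qed.

Lemma winv_cons x u : winv (x :: u) = rcons (winv u) (linv x).
Proof. by rewrite /winv /= rev_cons. Qed.

Lemma size_winv u : size (winv u) = size u.
Proof. by rewrite /winv size_rev size_map. Qed.

Lemma reduce_winv u w : reduce (u ++ winv u ++ w) = reduce w.
Proof.
elim: u w => //= x u IH w.
by rewrite winv_cons -cats1 -catA /= IH /= cons_red_cancel // reduce_reduced.
Qed.

Lemma reduce_winvl u w : reduce (winv u ++ u ++ w) = reduce w.
Proof. by rewrite -{2}(winvK u) reduce_winv. Qed.

Lemma reduced_winv u : reduced u -> reduced (winv u).
Proof.
rewrite /reduced /winv rev_sorted sorted_map => H.
rewrite (@eq_sorted _ _ (fun x y => y != linv x)) //.
by move=> x y /=; rewrite linvK eq_sym.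
Qed.
End FreeGroup.
Section FNGroup.
Variable N : nat.
Implicit Types (a b c g h k x y : FN N).
Local Notation "a * b" := (mulF a b).
Local Notation one := (oneF N).

Lemma FN_ext a b : proj1_sig a = proj1_sig b -> a = b.
Proof.
case: a b => [w Hw] [w' Hw'] /= E; subst w'.
by rewrite (bool_irrelevance Hw Hw').
Qed.

Lemma wd_red a : reduced (proj1_sig a).
Proof. by case: a. Qed.

Lemma wd_mul a b : proj1_sig (a * b) = reduce (proj1_sig a ++ proj1_sig b).
Proof. by []. Qed.

Lemma wd_inv a : proj1_sig ((invF a)) = winv (proj1_sig a).
Proof. by rewrite /= reduce_id // reduced_winv // wd_red. Qed.

Lemma mulFA a b c : a * b * c = a * (b * c).
Proof. by apply: FN_ext; rewrite /= reduce_catl reduce_catr catA. Qed.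

Lemma mul1F a : one * a = a.
Proof. by apply: FN_ext; rewrite /= reduce_id // wd_red. Qed.

Lemma mulF1 a : a * one = a.
Proof. by apply: FN_ext; rewrite /= cats0 reduce_id // wd_red. Qed.

Lemma mulFV a : a * (invF a) = one.
Proof. by apply: FN_ext; rewrite wd_mul wd_inv; have := reduce_winv (proj1_sig a) [::]; rewrite cats0 => ->. Qed.

Lemma mulVF a : (invF a) * a = one.
Proof.
by apply: FN_ext; rewrite wd_mul wd_inv; have := reduce_winvl (proj1_sig a) [::]; rewrite cats0 => ->.
Qed.

Lemma mulKF a b : (invF a) * (a * b) = b.
Proof. by rewrite -mulFA mulVF mul1F. Qed.

Lemma mulKVF a b : a * ((invF a) * b) = b.
Proof. by rewrite -mulFA mulFV mul1F. Qed.

Lemma mulFK a b : a * b * (invF b) = a.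
Proof. by rewrite mulFA mulFV mulF1. Qed.

Lemma mulFVK a b : a * (invF b) * b = a.
Proof. by rewrite mulFA mulVF mulF1. Qed.

Lemma inv_uniq a b : a * b = one -> b = (invF a).
Proof. by move=> E; rewrite -(mulKF a b) E mulF1. Qed.

Lemma invFK a : (invF ((invF a))) = a.
Proof. by apply/esym/inv_uniq; rewrite mulVF. Qed.

Lemma invF_mul a b : (invF (a * b)) = (invF b) * (invF a).
Proof. by apply/esym/inv_uniq; rewrite mulFA mulKVF mulFV. Qed.

Lemma invF1 : (invF one) = one.
Proof. by apply/esym/inv_uniq; rewrite mulF1. Qed.

Lemma mulF_injl a b c : a * b = a * c -> b = c.
Proof. by move=> E; rewrite -(mulKF a b) E mulKF. Qed.

Lemma mulF_injr a b c : b * a = c * a -> b = c.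
Proof. by move=> E; rewrite -(mulFK b a) E mulFK. Qed.

Definition conjF g x := g * x * (invF g).

Lemma conjF_mul g x y : conjF g (x * y) = conjF g x * conjF g y.
Proof. by rewrite /conjF !mulFA mulKF. Qed.

Lemma conjF_inv g x : conjF g ((invF x)) = (invF (conjF g x)).
Proof. by rewrite /conjF !invF_mul invFK mulFA. Qed.

Lemma conjF_comp g g' x : conjF g (conjF g' x) = conjF (g * g') x.
Proof. by rewrite /conjF invF_mul !mulFA. Qed.

Lemma conjF1 x : conjF one x = x.
Proof. by rewrite /conjF invF1 mulF1 mul1F. Qed.

Lemma conjFK g x : conjF ((invF g)) (conjF g x) = x.
Proof. by rewrite conjF_comp mulVF conjF1. Qed.

Lemma conjFKV g x : conjF g (conjF ((invF g)) x) = x.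
Proof. by rewrite conjF_comp mulFV conjF1. Qed.

Lemma conjF_inj g : injective (conjF g).
Proof. by move=> x y E; rewrite -(conjFK g x) E conjFK. Qed.

Lemma conjF_one g : conjF g one = one.
Proof. by rewrite /conjF mulF1 mulFV. Qed.

Section Sub.
Variable H : set (FN N).
Hypothesis sH : subgroup H.

Lemma sg1 : H one. Proof. by case: sH. Qed.
Lemma sgV x : H x -> H ((invF x)).
Proof. by move=> Hx; have := sH.2 _ _ sg1 Hx; rewrite mul1F. Qed.
Lemma sgM x y : H x -> H y -> H (x * y).
Proof. by move=> Hx Hy; have := sH.2 _ _ Hx (sgV Hy); rewrite invFK. Qed.
Lemma sgMl x y : H x -> H (x * y) -> H y.
Proof. by move=> Hx Hxy; have := sgM (sgV Hx) Hxy; rewrite mulKF. Qed.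
End Sub.

Lemma conjS_E g H x : conjS g H x <-> exists2 h, H h & x = conjF g h.
Proof. by split=> [[h Hh <-]|[h Hh ->]]; [exists h|exists h]. Qed.

Lemma conjS_mem g H h : H h -> conjS g H (conjF g h).
Proof. by move=> Hh; exists h. Qed.

Lemma conjS_comp g g' H : conjS g (conjS g' H) = conjS (g * g') H.
Proof.
rewrite predeqE => x; split.
  by case=> _ [h Hh <-] <-; exists h => //; exact: (esym (conjF_comp _ _ _)).
by case=> h Hh <-; exists (conjF g' h); [exists h|exact: conjF_comp].
Qed.

Lemma conjS1 H : conjS one H = H.
Proof.
rewrite predeqE => x; split; first by case=> h Hh <-; rewrite -/(conjF _ _) conjF1.
by move=> Hx; exists x => //; rewrite -/(conjF _ _) conjF1.
Qed.

Lemma conjSK g H : conjS ((invF g)) (conjS g H) = H.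
Proof. by rewrite conjS_comp mulVF conjS1. Qed.

Lemma conjSKV g H : conjS g (conjS ((invF g)) H) = H.
Proof. by rewrite conjS_comp mulFV conjS1. Qed.

Lemma conjS_memE g H x : conjS g H x <-> H (conjF ((invF g)) x).
Proof.
split; first by case=> h Hh <-; rewrite -/(conjF _ _) conjFK.
by move=> Hx; exists (conjF (invF g) x) => //; rewrite -/(conjF _ _) conjFKV.
Qed.

Lemma conjS_sub g H K : H `<=` K -> conjS g H `<=` conjS g K.
Proof. by move=> HK x [h Hh <-]; exists h => //; apply: HK. Qed.


Lemma conjS_setI g H K : conjS g (H `&` K) = conjS g H `&` conjS g K.
Proof.
rewrite predeqE => x; split.
  by move/conjS_memE => [? ?]; split; apply/conjS_memE.
by case=> /conjS_memE ? /conjS_memE ?; apply/conjS_memE.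
Qed.

Lemma conjS_subgroup g H : subgroup H -> subgroup (conjS g H).
Proof.
move=> sH; split; first by apply/conjS_memE; rewrite conjF_one; apply: sg1.
move=> x y /conjS_memE Hx /conjS_memE Hy; apply/conjS_memE.
by rewrite conjF_mul conjF_inv; apply: sH.2.
Qed.

Lemma conjS_in g H : subgroup H -> H g -> conjS g H = H.
Proof.
move=> sH Hg; rewrite predeqE => x; rewrite conjS_memE /conjF invFK; split.
  move=> Hx; have := sgM sH (sgM sH Hg Hx) (sgV sH Hg).
  by rewrite !mulFA mulFV mulF1 mulKVF.
move=> Hx; exact: (sgM sH (sgM sH (sgV sH Hg) Hx) Hg).
Qed.

End FNGroup.
Lemma choose_list (T U : Type) (Q : seq T) (P : T -> U -> Prop) :
  exists L : seq U, (forall y, List.In y L -> exists q, List.In q Q /\ P q y) /\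
    forall q, List.In q Q -> (exists y, P q y) -> exists y, List.In y L /\ P q y.
Proof.
elim: Q => [|q Q [L [H1 H2]]]; first by exists [::]; split=> // y [].
have [[y Hy]|Hn] := pselect (exists y, P q y).
  exists (y :: L); split.
    by move=> z [<-|Hz]; [exists q; split=> //; left|have [q' [? ?]] := H1 _ Hz; exists q'; split=> //; right].
  move=> q' [<-|Hq'] He; first by exists y; split=> //; left.
  by have [z [? ?]] := H2 _ Hq' He; exists z; split=> //; right.
exists L; split.
  by move=> z Hz; have [q' [? ?]] := H1 _ Hz; exists q'; split=> //; right.
move=> q' [<-|Hq'] He; first by case: Hn.
exact: H2.
Qed.

Section FI.
Variable N : nat.
Implicit Types (A B G M H K L : set (FN N)).
Local Notation "a * b" := (mulF a b).

Lemma subgroupI A B : subgroup A -> subgroup B -> subgroup (A `&` B).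
Proof.
move=> sA sB; split; first by split; apply: sg1.
by move=> x y [? ?] [? ?]; split; [apply: sA.2|apply: sB.2].
Qed.

Lemma fi_sup M A G : M `<=` A -> finite_index M G -> finite_index A G.
Proof.
move=> MA [s [Hs Hc]]; exists s; split=> // h Hh.
by have [x [? [k [? ?]]]] := Hc _ Hh; exists x; split=> //; exists k; split=> //; apply: MA.
Qed.

Lemma fi_restrict M A G : subgroup M -> M `<=` A -> A `<=` G ->
  finite_index M G -> finite_index M A.
Proof.
move=> sM MA AG [s [Hs Hc]].
have [L [HL1 HL2]] := choose_list s (fun c a => A a /\ exists2 m, M m & a = c * m).
exists L; split; first by move=> y /HL1 [q [_ []]].
move=> a Aa; have [c [Hcs [m [Mm E]]]] := Hc _ (AG _ Aa).
have [|y [Hy [Ay [m' Mm' Ey]]]] := HL2 _ Hcs; first by exists a; split=> //; exists m.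
exists y; split=> //; exists (invF m' * m); split; first by apply: (sgM sM) => //; apply: sgV.
by rewrite Ey E mulFA mulKVF.
Qed.

Lemma fi_trans M A G : subgroup G -> A `<=` G ->
  finite_index A G -> finite_index M A -> finite_index M G.
Proof.
move=> sG AG [s [Hs Hc]] [t [Ht Hct]].
exists (List.flat_map (fun x => List.map (mulF x) t) s); split.
  move=> z /List.in_flat_map [x [Hx /List.in_map_iff [y [<- Hy]]]].
  by apply: (sgM sG); [apply: Hs|apply: AG; apply: Ht].
move=> g Gg; have [x [Hx [a [Aa ->]]]] := Hc _ Gg.
have [y [Hy [m [Mm ->]]]] := Hct _ Aa.
exists (x * y); split; last by exists m; split=> //; rewrite mulFA.
by apply/List.in_flat_map; exists x; split=> //; apply/List.in_map_iff; exists y.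
Qed.

Lemma fi_cap A B G : subgroup A -> subgroup B ->
  finite_index A G -> finite_index B G -> finite_index (A `&` B) G.
Proof.
move=> sA sB [s [Hs Hc]] [t [Ht Hct]].
have [L [HL1 HL2]] := choose_list (List.list_prod s t)
  (fun p c => G c /\ (exists2 a, A a & c = p.1 * a) /\ (exists2 b, B b & c = p.2 * b)).
exists L; split; first by move=> y /HL1 [q [_ []]].
move=> g Gg; have [x [Hx [a [Aa Ea]]]] := Hc _ Gg.
have [y [Hy [b [Bb Eb]]]] := Hct _ Gg.
have Hin : List.In (x, y) (List.list_prod s t) by apply/List.in_prod.
have [c [Hc' [Gc [[a' Aa' Ea'] [b' Bb' Eb']]]]] := HL2 _ Hin
  (ex_intro _ g (conj Gg (conj (ex_intro2 _ _ a Aa Ea) (ex_intro2 _ _ b Bb Eb)))).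
exists c; split=> //; exists (invF c * g); split; last by rewrite mulKVF.
split.
  by rewrite Ea' Ea invF_mul mulFA mulKF; apply: (sgM sA) => //; apply: sgV.
by rewrite Eb' Eb invF_mul mulFA mulKF; apply: (sgM sB) => //; apply: sgV.
Qed.

Lemma fi_conj k M G : finite_index M G -> finite_index (conjS k M) (conjS k G).
Proof.
move=> [s [Hs Hc]]; exists (List.map (conjF k) s); split.
  by move=> z /List.in_map_iff [x [<- Hx]]; apply: conjS_mem; apply: Hs.
move=> _ [g Gg <-]; have [x [Hx [m [Mm ->]]]] := Hc _ Gg.
exists (conjF k x); split; first by apply/List.in_map_iff; exists x.
by exists (conjF k m); split; [apply: conjS_mem|rewrite -/(conjF _ _) conjF_mul].
Qed.

Lemma comm_step H K : subgroup H -> subgroup K -> H = Comm H ->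
  finite_index (H `&` K) H -> finite_index (H `&` K) K -> K `<=` H.
Proof.
move=> sH sK HC fH fK k Kk; rewrite HC.
set L := H `&` K.
have sL : subgroup L by apply: subgroupI.
set L' := conjS k L.
have sL' : subgroup L' by apply: conjS_subgroup.
have L'K : L' `<=` K.
  by rewrite -(conjS_in sK Kk); apply: conjS_sub => x [].
have fL' : finite_index L' K by rewrite -(conjS_in sK Kk); apply: fi_conj.
have fM : finite_index (L `&` L') K by apply: fi_cap.
have sM : subgroup (L `&` L') by apply: subgroupI.
have ML : L `&` L' `<=` H `&` conjS k H.
  move=> x [[Hx _] Lx]; split=> //; move: Lx; apply: conjS_sub => y [].
  by [].

change (finite_index (H `&` conjS k H) H /\ finite_index (H `&` conjS k H) (conjS k H)).
split.
  apply: fi_sup ML _; apply: fi_trans sH _ fH _; first by move=> x [].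
  by apply: fi_restrict fM => // x [].
have fL'H : finite_index L' (conjS k H) by apply: fi_conj.
apply: fi_sup ML _; apply: fi_trans (conjS_subgroup k sH) _ fL'H _.
  by apply: conjS_sub => x [].
by apply: fi_restrict fM => // x [].
Qed.

Lemma comm_up A B : subgroup A -> subgroup B -> B `<=` A -> B = Comm B ->
  finite_index B A -> A `<=` B.
Proof.
move=> sA sB BA BC fB a Aa; rewrite BC.
have sB' := conjS_subgroup a sB.
have B'A : conjS a B `<=` A by rewrite -(conjS_in sA Aa); apply: conjS_sub.
have fB' : finite_index (conjS a B) A by rewrite -(conjS_in sA Aa); apply: fi_conj.
have fM := fi_cap sB sB' fB fB'.
have sM := subgroupI sB sB'.
change (finite_index (B `&` conjS a B) B /\ finite_index (B `&` conjS a B) (conjS a B)).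
by split; apply: fi_restrict fM => // x [].
Qed.
End FI.
Section Gen.
Variable N : nat.
Implicit Types (A B G M H K L : set (FN N)).
Local Notation "a * b" := (mulF a b).
Local Notation wd := (@proj1_sig _ _).

Definition prodF (l : list (FN N)) := List.fold_right (@mulF N) (oneF N) l.

Definition gens_ok (S l : list (FN N)) :=
  forall y, List.In y l -> exists s, List.In s S /\ (y = s \/ y = invF s).

Definition fg' K := exists S : list (FN N), (forall s, List.In s S -> K s) /\
  forall b, K b -> exists l, gens_ok S l /\ b = prodF l.

Lemma prodF_app l1 l2 : prodF (List.app l1 l2) = prodF l1 * prodF l2.
Proof. by elim: l1 => [|y l IH] /=; [rewrite mul1F|rewrite IH mulFA]. Qed.

Lemma prodF_inv l : invF (prodF l) = prodF (List.rev (List.map (@Defs.invF N) l)).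
Proof.
elim: l => [|y l IH] /=; first by rewrite invF1.
by rewrite invF_mul IH prodF_app /= mulF1.
Qed.

Lemma gens_ok_app S l1 l2 : gens_ok S l1 -> gens_ok S l2 -> gens_ok S (List.app l1 l2).
Proof. by move=> H1 H2 y /List.in_app_iff [/H1|/H2]. Qed.

Lemma gens_ok_inv S l : gens_ok S l -> gens_ok S (List.rev (List.map (@Defs.invF N) l)).
Proof.
move=> Hl y Hy; have /List.in_map_iff [z [Ez Hz]] := proj2 (List.in_rev _ _) Hy.
subst y.
have [s [Hs [->|->]]] := Hl _ Hz; exists s; split=> //; [right|left] => //.
by rewrite invFK.
Qed.

Lemma fin_gen_fg K : subgroup K -> fin_gen K -> fg' K.
Proof.
move=> sK [S ES]; exists S; split.
  by move=> s Hs; rewrite ES => K' _ HK'; apply: HK'.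
move=> b; rewrite ES => /(_ [set x | exists l, gens_ok S l /\ x = prodF l]) Hb.
apply: Hb.
  split; first by exists nil; split=> // y [].
  move=> _ _ [l1 [H1 ->]] [l2 [H2 ->]].
  exists (List.app l1 (List.rev (List.map (@Defs.invF N) l2))); split.
    by apply: gens_ok_app => //; apply: gens_ok_inv.
  by rewrite prodF_app prodF_inv.
move=> s Hs; exists (s :: nil); split; last by rewrite /= mulF1.
by move=> y [<-|[]]; exists s; split=> //; left.
Qed.

Lemma prodF_conj g l : conjF g (prodF l) = prodF (List.map (conjF g) l).
Proof.
elim: l => [|y l IH] /=; first by rewrite conjF_one.
by rewrite conjF_mul IH.
Qed.

Lemma fg_conj g K : fg' K -> fg' (conjS g K).
Proof.
move=> [S [HS HK]]; exists (List.map (conjF g) S); split.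
  by move=> _ /List.in_map_iff [s [<- Hs]]; apply: conjS_mem; apply: HS.
move=> _ [b Kb <-]; have [l [Hl ->]] := HK _ Kb.
exists (List.map (conjF g) l); split; last by rewrite -prodF_conj.
move=> _ /List.in_map_iff [y [<- Hy]]; have [s [Hs Es]] := Hl _ Hy.
exists (conjF g s); split; first by apply/List.in_map_iff; exists s.
by case: Es => ->; [left|right; rewrite conjF_inv].
Qed.

Lemma reduced_prefix (p s : seq (letter N)) : reduced (p ++ s) -> reduced p.
Proof. by move=> /cat_sorted2 []. Qed.

Lemma reduced_suffix (p s : seq (letter N)) : reduced (p ++ s) -> reduced s.
Proof. by move=> /cat_sorted2 []. Qed.

Lemma prefix_lemma (a b : seq (letter N)) : reduced a -> reduced b ->
  forall p s, reduce (a ++ b) = p ++ s ->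
  (exists t, a = p ++ t) \/ (exists q t, b = q ++ t /\ p = reduce (a ++ q)).
Proof.
move=> Ha Hb; elim: a Ha => [|x a IH] Ha p s.
  rewrite /= -/(reduce b) reduce_id // => Eb; right; exists p, s; split=> //.
  by rewrite /= -/(reduce p) reduce_id //; apply: (@reduced_prefix p s); rewrite -Eb.
have Ha' : reduced a by move: Ha; rewrite reduced_cons => /andP[].
rewrite cat_cons /= -/(reduce (a ++ b)).
case Ew: (reduce (a ++ b)) => [|y w].
  move=> /= E; case: p E => [|z p] /=; first by left; exists (x :: a).
  by case=> <-; case: p => // _; left; exists a.
rewrite /=; case: eqP => [Ey|Ey] E.
  have := IH Ha' (y :: p) s; rewrite Ew E => /(_ erefl) [[t Et]|[q [t [Eb Ep]]]].
    by move: Ha; rewrite Et Ey /= eqxx.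
  right; exists q, t; split=> //.
  by rewrite -Ep /= Ey eqxx.
case: p E => [|z p] E; first by left; exists (x :: a).
case: E => <- E.
have := IH Ha' p s; rewrite Ew E => /(_ erefl) [[t Et]|[q [t [Eb Ep]]]].
  by left; exists t; rewrite Et.
right; exists q, t; split=> //.
rewrite -Ep.
case: p Ep E => [|z' p'] Ep E //=.
case: E => <- _.
by case: eqP.
Qed.

End Gen.
Section QC.
Variable N : nat.
Implicit Types (K : set (FN N)).
Local Notation "a * b" := (mulF a b).
Local Notation wd := (@proj1_sig _ _).

Definition pref_list (w : seq (letter N)) : list (seq (letter N)) :=
  List.map (fun i => take i w) (List.seq 0 (size w).+1).

Lemma pref_in w q t : w = q ++ t -> List.In q (pref_list w).
Proof.
move=> E; apply/List.in_map_iff; exists (size q); split; first by rewrite E take_size_cat.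
apply/List.in_seq; rewrite E size_cat; split; first by apply/leP.
by apply/ltP; rewrite ltnS leq_addr.
Qed.

Lemma qc K : subgroup K -> fg' K -> exists Q : list (seq (letter N)),
  forall b, K b -> forall p t, wd b = p ++ t ->
  exists b', K b' /\ exists q, List.In q Q /\ p = reduce (wd b' ++ q).
Proof.
move=> sK [S [HS HK]].
pose GL := List.flat_map (fun s => s :: invF s :: nil) S.
exists ([::] :: List.flat_map (fun g => pref_list (wd g)) GL).
have HGL : forall y, List.In y GL <-> exists s, List.In s S /\ (y = s \/ y = invF s).
  move=> y; rewrite /GL List.in_flat_map; split.
    by move=> [s [Hs [<-|[<-|[]]]]]; exists s; split=> //; [left|right].
  by move=> [s [Hs [->|->]]]; exists s; split=> //; [left|right; left].
move=> b /HK [l [Hl ->]] {b}.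
elim: l Hl => [|y l IH] Hl p t /=.
  case: p => // _; exists (oneF N); split; first by apply: sg1.
  by exists [::]; split; [left|].
have Ky : K y by have [s [Hs [->|->]]] := Hl _ (or_introl erefl); [|apply: (sgV sK)]; apply: HS.
have Hl' : gens_ok S l by move=> z Hz; apply: Hl; right.
move/prefix_lemma => /(_ (wd_red _) (wd_red _)) [[t' Et']|[q [t' [Eq Ep]]]].
  exists (oneF N); split; first by apply: sg1.
  exists p; split.
    right; apply/List.in_flat_map; exists y; split; last by apply: (pref_in Et').
    by apply/HGL; apply: Hl; left.
  by rewrite /= -/(reduce p) reduce_id //; apply: (@reduced_prefix _ p t'); rewrite -Et'; apply: wd_red.
have [b'' [Kb'' [q' [Hq' Eq']]]] := IH Hl' _ _ Eq.
exists (y * b''); split; first by apply: sgM.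
exists q'; split=> //.
by rewrite Ep Eq' reduce_catr wd_mul reduce_catl catA.
Qed.
End QC.
Section Ray.
Variable N : nat.
Local Notation "a * b" := (mulF a b).
Local Notation wd := (@proj1_sig _ _).
Implicit Types (a c u v w : seq (letter N)).

Definition jn a b := match a, b with
  | x :: a', y :: _ => y != linv (last x a') | _, _ => true end.

Lemma reduced_cat a (b : seq (letter N)) : reduced (a ++ b) = [&& reduced a, reduced b & jn a b].
Proof.
case: a => [|x a] /=; first by case: b => //= y b; rewrite andbT.
rewrite /reduced /= cat_path; case: b => [|y b] /=; first by rewrite !andbT.
by case: (path _ x a); case: (path _ y b); case: (y != _).
Qed.

Lemma jn_catr a (b : seq (letter N)) c : b != [::] -> jn a (b ++ c) = jn a b.
Proof. by case: a => // x a; case: b. Qed.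

Lemma reduced3 a (b : seq (letter N)) c : b != [::] -> reduced (a ++ b) -> reduced (b ++ c) ->
  reduced (a ++ b ++ c).
Proof.
move=> nb; rewrite !reduced_cat => /and3P[ra rb jab] Hbc.
by rewrite ra Hbc jn_catr.
Qed.

Definition cred c := (c != [::]) && reduced (c ++ c).

Lemma cred_red c : cred c -> reduced c.
Proof. by case/andP => _ /reduced_prefix. Qed.

Lemma cred_winv c : cred c -> cred (winv c).
Proof.
case/andP => nc rc; apply/andP; split.
  by rewrite -size_eq0 size_winv size_eq0.
by rewrite -winv_cat; apply: reduced_winv.
Qed.

Lemma cyc_decomp w : reduced w -> w != [::] ->
  exists u c, cred c /\ w = u ++ c ++ winv u.
Proof.
have [n Hn] := ubnP (size w); elim: n w Hn => // n IH w Hn.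
case: w Hn => // x w' Hn Hw _.
case/lastP: w' Hn Hw => [|m y] Hn Hw.
  exists [::], [:: x]; split=> //.
  by rewrite /cred /= /reduced /= andbT linv_neq.
have [Ey|Ey] := eqVneq y (linv x).
  subst y.
  have nm : m != [::].
    by apply/eqP => Em; move: Hw; rewrite Em /= /reduced /= eqxx.
  have rm : reduced m.
    by move: Hw; rewrite -cats1 -cat1s => /reduced_suffix /reduced_prefix.
  have [|u [c [cc Em]]] := IH m _ rm nm.
    by move: Hn; rewrite /= size_rcons !ltnS; apply: leq_trans.
  exists (x :: u), c; split=> //.
  by rewrite winv_cons Em -!cats1 -!catA.
exists [::], (x :: rcons m y); split; last by rewrite /= cats0.
apply/andP; split=> //.
rewrite reduced_cat Hw /= last_rcons.
by rewrite -linv_eqC.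
Qed.

Fixpoint crep n c := if n is n'.+1 then c ++ crep n' c else [::].

Lemma size_crep n c : size (crep n c) = (n * size c)%N.
Proof. by elim: n => //= n IH; rewrite size_cat IH mulSn. Qed.

Lemma crep_add m n c : crep (m + n) c = crep m c ++ crep n c.
Proof. by elim: m => //= m IH; rewrite IH catA. Qed.

Lemma crep_red_tail c v n : cred c -> reduced (c ++ v) -> reduced (crep n.+1 c ++ v).
Proof.
move=> cc rcv; elim: n => [|n IH] /=; first by rewrite cats0.
have nc : c != [::] by case/andP: cc.
rewrite -!catA; apply: reduced3 => //; first by case/andP: cc.
by move: IH; rewrite /= -catA.
Qed.

Lemma reduced_xcv x c v n : cred c -> reduced (x ++ c) -> reduced (c ++ v) ->
  reduced (x ++ crep n.+1 c ++ v).
Proof.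
move=> cc rxc rcv; have nc : c != [::] by case/andP: cc.
rewrite /= -catA; apply: reduced3 => //.
case: n => [|n]; first by simpl.
by have := crep_red_tail n.+1 cc rcv; rewrite [crep n.+2 c]/= -catA.
Qed.

Definition ray (d : letter N) x c n := nth d (x ++ crep n.+1 c) n.

Lemma size_crep_ge c n : c != [::] -> n <= size (crep n c).
Proof.
rewrite -size_eq0 size_crep => nc; rewrite -{1}(muln1 n) leq_mul2l.
by rewrite lt0n nc orbT.
Qed.

Lemma ray_nth d x c m n : c != [::] -> n < m -> nth d (x ++ crep m c) n = ray d x c n.
Proof.
move=> nc nm; rewrite /ray -(subnKC nm) crep_add catA nth_cat size_cat.
have Hs : n < size x + size (crep n.+1 c).
  exact: leq_trans (size_crep_ge n.+1 nc) (leq_addl _ _).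
by rewrite Hs.
Qed.

Lemma ray_mkseq d x c k m : c != [::] -> k <= m ->
  mkseq (ray d x c) k = take k (x ++ crep m c).
Proof.
move=> nc km; apply: (@eq_from_nth _ d).
  rewrite size_mkseq size_takel // size_cat.
  by apply: leq_trans (leq_addl _ _); apply: leq_trans km (size_crep_ge _ nc).
move=> i; rewrite size_mkseq => ik.
by rewrite nth_mkseq // nth_take // ray_nth // (leq_trans ik km).
Qed.

Lemma ray_bdry d x c n : cred c -> reduced (x ++ c) ->
  ray d x c n.+1 != linv (ray d x c n).
Proof.
move=> cc rxc; have nc : c != [::] by case/andP: cc.
have rw : reduced (x ++ crep n.+2 c).
  by rewrite -[crep _ _]cats0; apply: reduced_xcv => //; rewrite cats0; apply: cred_red.
rewrite -(ray_nth d x nc (ltnSn n.+1)) -(ray_nth d x nc (ltnW (ltnSn n.+1))).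
move/(sortedP d): rw; apply.
rewrite size_cat; apply: leq_trans (leq_addl _ _); exact: size_crep_ge.
Qed.

Definition pw g n := iter n (mulF g) (oneF N).

Lemma pw_in H g n : subgroup H -> H g -> H (pw g n).
Proof. by move=> sH Hg; elim: n => [|n IH] /=; [apply: sg1|apply: sgM]. Qed.

Lemma pw_word g u c n : cred c -> wd g = u ++ c ++ winv u ->
  wd (pw g n.+1) = u ++ crep n.+1 c ++ winv u.
Proof.
move=> cc Eg; have rg := wd_red g; rewrite Eg in rg.
have ruc : reduced (u ++ c) by move: rg; rewrite catA => /reduced_prefix.
have rcu : reduced (c ++ winv u) by move: rg => /reduced_suffix.
elim: n => [|n IH].
  have -> : pw g 1 = g by rewrite /pw [iter _ _ _]/= mulF1.
  by rewrite Eg /= cats0.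
rewrite [pw _ _]/= wd_mul -/(pw g n.+1) IH Eg.
have -> : (u ++ c ++ winv u) ++ (u ++ crep n.+1 c ++ winv u) =
    (u ++ c) ++ (winv u ++ u ++ (crep n.+1 c ++ winv u)) by rewrite !catA.
rewrite -reduce_catr reduce_winvl reduce_catr reduce_id.
  by rewrite -!catA.
have := @reduced_xcv u c (winv u) n.+1 cc ruc rcu.
by rewrite [crep n.+2 c]/= !catA.
Qed.

Lemma hpw_word h g u c n : cred c -> wd g = u ++ c ++ winv u ->
  reduced (reduce (wd h ++ u) ++ c) ->
  wd (h * pw g n.+1) = reduce (wd h ++ u) ++ crep n.+1 c ++ winv u.
Proof.
move=> cc Eg rxc; have rg := wd_red g; rewrite Eg in rg.
have rcu : reduced (c ++ winv u) by move: rg => /reduced_suffix.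
have R := reduced_xcv n cc rxc rcu.
by rewrite wd_mul (pw_word _ cc Eg) catA -reduce_catl (reduce_id R).
Qed.

Lemma limset_take (K : set (FN N)) (xi : bdry N) : limset K xi ->
  forall k, exists b, K b /\ take k (wd b) = mkseq (sval xi) k.
Proof.
move=> [h [Hh Hc]] k; have [n0 Hn0] := Hc k.
by exists (h n0); split=> //; apply: Hn0.
Qed.

Lemma limset_intro (K : set (FN N)) (xi : bdry N) :
  (forall k, exists b, K b /\ take k (wd b) = mkseq (sval xi) k) -> limset K xi.
Proof.
move=> Hk; have [f Hf] := choice Hk.
exists f; split; first by move=> n; case: (Hf n).
move=> k; exists k => n kn.
have [_ E] := Hf n.
rewrite -(take_takel _ kn) E.
apply: (@eq_from_nth _ (sval xi 0)).
  by rewrite size_mkseq size_takel // size_mkseq.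
move=> i; rewrite size_takel ?size_mkseq // => ik.
by rewrite nth_take // !nth_mkseq // (leq_trans ik kn).
Qed.

Lemma limset_closed (K : set (FN N)) : closedB (limset K).
Proof.
move=> xi Hxi; apply: limset_intro => k.
have [e [He Ee]] := Hxi k.
have [b [Kb Eb]] := limset_take He k.
exists b; split=> //; rewrite Eb.
apply: (@eq_from_nth _ (sval xi 0)); first by rewrite !size_mkseq.
by move=> i; rewrite size_mkseq => ik; rewrite !nth_mkseq //; apply: Ee.
Qed.

Lemma ray_limset H g u c h d : subgroup H -> H g -> H h -> cred c ->
  wd g = u ++ c ++ winv u -> reduced (reduce (wd h ++ u) ++ c) ->
  exists xi : bdry N, limset H xi /\ sval xi = ray d (reduce (wd h ++ u)) c.
Proof.
move=> sH Hg Hh cc Eg rxc.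
have nc : c != [::] by case/andP: cc.
exists (exist (fun xi : nat -> letter N => forall n, xi n.+1 != linv (xi n))
  (ray d (reduce (wd h ++ u)) c) (fun n => ray_bdry d n cc rxc)).
split=> //; exists (fun n => h * pw g n.+1); split.
  by move=> n; apply: sgM => //; apply: pw_in.
move=> k; exists k => n kn.
change (take k (wd (h * pw g n.+1)) = mkseq (ray d (reduce (wd h ++ u)) c) k).
rewrite (hpw_word n cc Eg rxc) catA takel_cat; first by rewrite (@ray_mkseq d _ c k n.+1 nc) // ltnW ?ltnS.
rewrite size_cat; apply: (leq_trans _ (leq_addl _ _)).
exact: leq_trans kn (leq_trans (leqnSn n) (size_crep_ge _ nc)).
Qed.
End Ray.
Section Main.
Variable N : nat.
Local Notation "a * b" := (mulF a b).
Local Notation wd := (@proj1_sig _ _).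

Lemma jn_choice (x c : seq (letter N)) : cred c -> jn x c \/ jn x (winv c).
Proof.
case/andP => nc; rewrite reduced_cat => /and3P[_ _ jcc].
case/lastP: x => [|x1 l]; first by left.
case: c nc jcc => // y c1 _ jcc.
have Ej : forall b w, jn (rcons x1 l) (b :: w) = (b != linv l).
  by move=> b w; case: x1 => //= ? ?; rewrite last_rcons.
have Hw : winv (y :: c1) = linv (last y c1) :: winv (belast y c1).
  by rewrite [y :: c1]lastI /winv map_rcons rev_rcons.
rewrite Hw !Ej.
have [E1|E1] := eqVneq y (linv l); last by left.
right; apply/negP => /eqP /linv_inj E2.
by move: jcc; rewrite /= E2 E1 eqxx.
Qed.

End Main.
Section Main2.
Variable N : nat.
Local Notation "a * b" := (mulF a b).
Local Notation wd := (@proj1_sig _ _).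

Definition fnr (w : seq (letter N)) : FN N := exist _ (reduce w) (reduce_reduced w).

Definition QCprop (K : set (FN N)) (Q : list (seq (letter N))) :=
  forall b, K b -> forall p t, wd b = p ++ t ->
  exists b', K b' /\ exists q, List.In q Q /\ p = reduce (wd b' ++ q).

Lemma label (H K : set (FN N)) Q h0 u c : subgroup H -> H h0 -> cred c ->
  wd h0 = u ++ c ++ winv u -> QCprop K Q -> limset H `<=` limset K ->
  forall h, H h -> exists q, List.In q Q /\ exists k, K k /\ h * fnr u = k * fnr q.
Proof.
move=> sH Hh0 cc Eh0 HQ Hsub h Hh.
set x := reduce (wd h ++ u).
have [c' [g [Hg [cc' [Eg rxc]]]]] : exists c' g, H g /\ cred c' /\
    wd g = u ++ c' ++ winv u /\ reduced (x ++ c').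
  have rc : forall c'', cred c'' -> jn x c'' -> reduced (x ++ c'').
    by move=> c'' cc'' j; rewrite reduced_cat reduce_reduced cred_red.
  case: (jn_choice x cc) => j.
    by exists c, h0; split=> //; split=> //; split=> //; apply: rc.
  exists (winv c), (invF h0); split; first by apply: sgV.
  split; first by apply: cred_winv.
  split; last by apply: rc => //; apply: cred_winv.
  by rewrite wd_inv Eh0 !winv_cat winvK catA.
have nc' : c' != [::] by case/andP: cc'.
case Ec': c' nc' => [//|d c1] _.
have [xi [Lxi Exi]] := ray_limset d sH Hg Hh cc' Eg rxc.
have [b [Kb Eb]] := limset_take (Hsub _ Lxi) (size x).
have Ex : take (size x) (wd b) = x.
  rewrite Eb Exi -/x (@ray_mkseq _ d x c' (size x) (size x)) ?Ec' //.
  by rewrite take_size_cat.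
have Eb2 : wd b = x ++ drop (size x) (wd b) by rewrite -{1}Ex cat_take_drop.
have [b' [Kb' [q [Hq Eq]]]] := HQ _ Kb x (drop (size x) (wd b)) Eb2.
exists q; split=> //; exists b'; split=> //.
by apply: FN_ext; rewrite !wd_mul /= !reduce_catr -/x Eq.
Qed.

Lemma main_fi (H K : set (FN N)) : subgroup H -> subgroup K -> nontrivial H ->
  fg' K -> limset H `<=` limset K -> finite_index (H `&` K) H.
Proof.
move=> sH sK [h0 [Hh0 nh0]] fK Hsub.
have nw : wd h0 != [::].
  by apply/eqP => E; apply: nh0; apply: FN_ext; rewrite E.
have [u [c [cc Eh0]]] := cyc_decomp (wd_red h0) nw.
have [Q HQ] := qc sK fK.
have Lab := label sH Hh0 cc Eh0 HQ Hsub.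
have [L [HL1 HL2]] := choose_list Q
  (fun q y => H y /\ exists k, K k /\ y * fnr u = k * fnr q).
exists (List.map (@Defs.invF N) L); split.
  by move=> z /List.in_map_iff [y [<- /HL1 [q [_ [Hy _]]]]]; apply: sgV.
move=> h Hh.
have [q [Hq [k [Kk Ek]]]] := Lab _ (sgV sH Hh).
have [y [Hy [Hy' [k' [Kk' Ey]]]]] := HL2 _ Hq (ex_intro _ _ (conj (sgV sH Hh) (ex_intro _ k (conj Kk Ek)))).
have E1 : invF (y * h) = (invF h * fnr u) * invF (y * fnr u).
  by rewrite invF_mul [invF (y * fnr u)]invF_mul mulFA mulKVF.
have E2 : invF (y * h) = k * invF k'.
  by rewrite E1 Ek Ey invF_mul mulFA mulKVF.
have Kyh : K (y * h).
  by rewrite -(invFK (y * h)) E2; apply: sgV => //; apply: (sgM sK) => //; apply: sgV.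
exists (invF y); split; first by apply/List.in_map_iff; exists y.
exists (y * h); split; first by split=> //; apply: sgM.
by rewrite mulKF.
Qed.
End Main2.
Section Final.
Variable N : nat.
Local Notation "a * b" := (mulF a b).
Local Notation wd := (@proj1_sig _ _).

Lemma ray_at (d y : letter N) x c1 : ray d x (y :: c1) (size x) = y.
Proof. by rewrite /ray nth_cat ltnn subnn. Qed.

Lemma limset_two (H : set (FN N)) : subgroup H -> nontrivial H ->
  exists a b, limset H a /\ limset H b /\ a <> b.
Proof.
move=> sH [h0 [Hh0 nh0]].
have nw : wd h0 != [::].
  by apply/eqP => E; apply: nh0; apply: FN_ext; rewrite E.
have [u [c [cc Eh0]]] := cyc_decomp (wd_red h0) nw.
have rw := wd_red h0; rewrite Eh0 in rw.
have ru : reduced u by move: rw => /reduced_prefix.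
have Ex : reduce (wd (oneF N) ++ u) = u by rewrite /= reduce_id.
have Ei : wd (invF h0) = u ++ winv c ++ winv u.
  by rewrite wd_inv Eh0 !winv_cat winvK catA.
have rw' := wd_red (invF h0); rewrite Ei in rw'.
have nc : c != [::] by case/andP: cc.
case Ec: c nc => [//|d c1] _.
have [xi1 [L1 E1]] := ray_limset d sH Hh0 (sg1 sH) cc Eh0 ltac:(by rewrite Ex; move: rw; rewrite catA => /reduced_prefix).
have [xi2 [L2 E2]] := ray_limset d sH (sgV sH Hh0) (sg1 sH) (cred_winv cc) Ei ltac:(by rewrite Ex; move: rw'; rewrite catA => /reduced_prefix).
exists xi1, xi2; split=> //; split=> // E12.
have : sval xi1 (size u) = sval xi2 (size u) by rewrite E12.
rewrite E1 E2 Ex.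
have Hw : winv c = linv (last d c1) :: winv (belast d c1).
  by rewrite Ec [d :: c1]lastI /winv map_rcons rev_rcons.
rewrite Hw Ec !ray_at => Edl.
move: cc; rewrite Ec /cred reduced_cat /= => /and3P[_ _].
by rewrite -Edl eqxx.
Qed.

Definition fam (H : set (FN N)) := [set K : set (FN N) | exists g, K = conjS g H].

Lemma fam_conj (H : set (FN N)) g : fam (conjS g H) = fam H.
Proof.
rewrite predeqE => K; split.
  by case=> x ->; exists (x * g); rewrite conjS_comp.
by case=> y ->; exists (y * invF g); rewrite conjS_comp mulFVK.
Qed.

End Final.

Theorem proposition4p7 (N : nat) (H H' : set (FN N)) :
  subgroup H -> subgroup H' ->
  nontrivial H -> nontrivial H' ->
  fin_gen H -> fin_gen H' ->
  H = Comm H -> H' = Comm H' ->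
  ((forall A : set (set (bdry N)), A `<=` @CN N -> eta H A = eta H' A) <->
   exists g : FN N, H' = conjS g H).
Proof.
move=> sH sH' ntH ntH' fgH fgH' HC H'C; split; last first.
  by move=> [g ->] A _; rewrite /eta -/(fam H) -/(fam (conjS g H)) fam_conj.
move=> Heq.
pose A := [set limset H].
have AC : A `<=` @CN N.
  move=> C ->; split; first by apply: limset_closed.
  exact: limset_two.
have [g Eg] : exists g, limset (conjS g H') = limset H.
  apply: contrapT => Hn.
  have E0 : eta H' A = 0%E.
    rewrite /eta; apply: esum1 => K [g ->].
    by rewrite asboolF //= => E; apply: Hn; exists g.
  have := Heq A AC; rewrite E0 /eta (esumID [set H]); last first.
    by move=> K _; case: ifP.
  have -> : fam H `&` [set H] = [set H].
    rewrite predeqE => K; split; first by case.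
    by move=> ->; split=> //; exists (oneF N); rewrite conjS1.
  rewrite esum_set1; last by case: ifP.
  rewrite asboolT // => E.
  have : (1 <= 0 :> \bar Rdefinitions.R)%E.
    rewrite -E; apply: leeDl; apply: esum_ge0 => K _; case: ifP => //.
  by move=> H10; have := Order.POrderTheory.le_lt_trans H10 lte01; rewrite Order.POrderTheory.ltxx.
set K := conjS g H'.
have sK : subgroup K by apply: conjS_subgroup.
have ntK : nontrivial K.
  case: ntH' => h [Hh nh]; exists (conjF g h); split; first by apply: conjS_mem.
  by move=> E; apply: nh; apply: (@conjF_inj _ g); rewrite E conjF_one.
have fK : fg' K by apply: fg_conj; apply: fin_gen_fg.
have fH : fg' H by apply: fin_gen_fg.
have fiH : finite_index (H `&` K) H by apply: main_fi => //; rewrite Eg.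
have fiK : finite_index (H `&` K) K by rewrite setIC; apply: main_fi => //; rewrite Eg.
have KH : K `<=` H by apply: comm_step fiH fiK.
have fKH : finite_index K H by rewrite -(setIidr KH).
have EH' : H' = conjS (invF g) K by rewrite /K conjSK.
have sH2 := conjS_subgroup (invF g) sH.
have H'H2 : H' `<=` conjS (invF g) H by rewrite EH'; apply: conjS_sub.
have fi2 : finite_index H' (conjS (invF g) H) by rewrite EH'; apply: fi_conj.
have := comm_up sH2 sH' H'H2 H'C fi2 => H2H'.
exists (invF g); rewrite eqEsubset; split=> //.
Qed.
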